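(* Let $Z\in\mathfrak{h}_2$, $A=\mathbb{C}^2/(Z\mathbb{Z}^2+\mathrm{diag}(1,4)\mathbb{Z}^2)$, $L_0$ the polarising line bundle of characteristic $0$ on $A$ with respect to $\mathbb{C}^2=Z\mathbb{R}^2+\mathbb{R}^2$, and $C_A=\{\theta_A=0\}$ where $\theta_A=\theta\begin{bmatrix}3\omega\\0\end{bmatrix}(\cdot,Z)-\theta\begin{bmatrix}\omega\\0\end{bmatrix}(\cdot,Z)$, $\omega=(0,\tfrac14)$. Then $C_A$ is invariant under translation by every element of the subgroup $K(L_0)\cap A[2]$, which is isomorphic to the Klein group $\mathbb{Z}_2\times\mathbb{Z}_2$.
   Context: $K(L_0)$ is the kernel of the isogeny $\phi_{L_0}:A\to\widehat{A}$, $a\mapsto t_a^*L_0\otimes L_0^{-1}$; $A[2]$ is the group of $2$-torsion points. Classical theta functions: $\theta\begin{bmatrix}c_1\\c_2\end{bmatrix}(v,Z)=\sum_{l\in\mathbb{Z}^2}\exp\big(\pi i\,{}^t(l+c_1)Z(l+c_1)+2\pi i\,{}^t(l+c_1)(v+c_2)\big)$. *)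

(* Defs.v *)
From Stdlib Require Import Reals ZArith.
From Coquelicot Require Import Coquelicot.
Local Open Scope R_scope.
Local Open Scope C_scope.

(* A symmetric 2x2 complex matrix  Z = [[a, b], [b, c]]  and points of C^2
   (as pairs).  Z lies in the Siegel upper half space h_2 iff it is
   symmetric (built in) and Im Z is positive definite. *)
Definition siegel2 (a b c : C) : Prop :=
  (0 < Im a)%R /\ (0 < Im a * Im c - Im b * Im b)%R.

Definition cexp (z : C) : C :=
  ((exp (Re z) * cos (Im z))%R, (exp (Re z) * sin (Im z))%R).

Definition theta_term (a b c : C) (c1 c2 : R * R) (v : C * C) (l : Z * Z) : C :=
  let u1 : C := RtoC (IZR (fst l) + fst c1)%R in
  let u2 : C := RtoC (IZR (snd l) + snd c1)%R in
  cexp (RtoC PI * Ci * (u1 * (a * u1 + b * u2) + u2 * (b * u1 + c * u2))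
        + RtoC (2 * PI) * Ci * (u1 * (fst v + RtoC (fst c2))
                                + u2 * (snd v + RtoC (snd c2)))).

Definition theta_partial (a b c : C) (c1 c2 : R * R) (v : C * C) (N : nat) : C :=
  sum_n (fun i : nat =>
    sum_n (fun j : nat =>
      theta_term a b c c1 c2 v
        ((Z.of_nat i - Z.of_nat N)%Z, (Z.of_nat j - Z.of_nat N)%Z)) (2 * N)) (2 * N).

(* classical theta function with characteristic: limit of the (absolutely
   convergent) series, taken along square boxes *)
Definition theta (a b c : C) (c1 c2 : R * R) (v : C * C) : C :=
  (real (Lim_seq (fun N => Re (theta_partial a b c c1 c2 v N))),
   real (Lim_seq (fun N => Im (theta_partial a b c c1 c2 v N)))).

Definition omega : R * R := (0%R, (1/4)%R).

Definition theta_A (a b c : C) (v : C * C) : C :=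
  theta a b c ((3 * fst omega)%R, (3 * snd omega)%R) (0%R, 0%R) v
  - theta a b c omega (0%R, 0%R) v.

(* C_A = { theta_A = 0 }, as a (Lambda-invariant) subset of C^2 *)
Definition C_A (a b c : C) (v : C * C) : Prop := theta_A a b c v = 0.

Definition in_lattice (a b c : C) (v : C * C) : Prop :=
  exists n1 n2 m1 m2 : Z,
    v = (a * IZR n1 + b * IZR n2 + IZR m1,
         b * IZR n1 + c * IZR n2 + 4 * IZR m2).

Definition vadd (v w : C * C) : C * C := (fst v + fst w, snd v + snd w).
Definition vsub (v w : C * C) : C * C := (fst v - fst w, snd v - snd w).
Definition vscal (k : C) (v : C * C) : C * C := (k * fst v, k * snd v).

(* First Chern class of L_0: E = Im H with H(v,w) = v^T (Im Z)^{-1} conj(w).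
   In the coordinates C^2 = Z R^2 + R^2 this is
   E(Z x1 + y1, Z x2 + y2) = x1.y2 - y1.x2, of type diag(1,4) on Lambda. *)
Definition E_L0 (a b c : C) (v w : C * C) : R :=
  let p := Im a in let q := Im b in let r := Im c in
  let d := (p * r - q * q)%R in
  let w1 := Cconj (fst w) in let w2 := Cconj (snd w) in
  Im ((fst v * (RtoC (r / d) * w1 + RtoC (- q / d) * w2)
     + snd v * (RtoC (- q / d) * w1 + RtoC (p / d) * w2))).

(* K(L_0) = Lambda(L_0)/Lambda, Lambda(L_0) = { v | E(v, Lambda) in Z };
   represented by its (Lambda-saturated) preimage in C^2 *)
Definition in_K_L0 (a b c : C) (v : C * C) : Prop :=
  forall l, in_lattice a b c l -> exists k : Z, E_L0 a b c v l = IZR k.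

Definition in_A2 (a b c : C) (v : C * C) : Prop :=
  in_lattice a b c (vscal 2 v).

Definition in_K_cap_A2 (a b c : C) (v : C * C) : Prop :=
  in_K_L0 a b c v /\ in_A2 a b c v.

(* The subgroup (K(L_0) cap A[2]) of A = C^2/Lambda is isomorphic to the
   Klein group Z_2 x Z_2 = (bool * bool, componentwise xor):
   f is a group isomorphism onto the subgroup, modulo Lambda. *)
Definition klein_iso (a b c : C) (f : bool * bool -> C * C) : Prop :=
  (forall x, in_K_cap_A2 a b c (f x)) /\
  (forall x y, in_lattice a b c
      (vsub (f (xorb (fst x) (fst y), xorb (snd x) (snd y))) (vadd (f x) (f y)))) /\
  (forall x y, in_lattice a b c (vsub (f x) (f y)) -> x = y) /\
  (forall v, in_K_cap_A2 a b c v -> exists x, in_lattice a b c (vsub v (f x))).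

(* Main.v *)
Require Import Defs.
From Stdlib Require Import Reals ZArith Lra Lia.
From Coquelicot Require Import Coquelicot.
Open Scope R_scope.
Open Scope C_scope.

Fixpoint zsumC (h : Z -> C) (N : nat) : C :=
  match N with
  | O => h 0%Z
  | S n => zsumC h n + h (Z.of_nat (S n)) + h (- Z.of_nat (S n))%Z
  end.
Fixpoint zsumR (h : Z -> R) (N : nat) : R :=
  match N with
  | O => h 0%Z
  | S n => (zsumR h n + h (Z.of_nat (S n)) + h (- Z.of_nat (S n))%Z)%R
  end.

Lemma zsumC_S h n : zsumC h (S n) = zsumC h n + h (Z.of_nat (S n)) + h (- Z.of_nat (S n))%Z.
Proof. reflexivity. Qed.
Lemma zsumR_S h n : zsumR h (S n) = (zsumR h n + h (Z.of_nat (S n)) + h (- Z.of_nat (S n))%Z)%R.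
Proof. reflexivity. Qed.
Lemma zsumC_ext h1 h2 N : (forall l, h1 l = h2 l) -> zsumC h1 N = zsumC h2 N.
Proof. intros H; induction N; simpl; rewrite ?IHN, ?H; auto. Qed.
Lemma zsumR_ext h1 h2 N : (forall l, h1 l = h2 l) -> zsumR h1 N = zsumR h2 N.
Proof. intros H; induction N; simpl; rewrite ?IHN, ?H; auto. Qed.
Lemma zsumC_plus h1 h2 N : zsumC (fun l => h1 l + h2 l) N = zsumC h1 N + zsumC h2 N.
Proof. induction N; simpl; [auto|rewrite IHN; ring]. Qed.
Lemma zsumC_scal k h N : zsumC (fun l => k * h l) N = k * zsumC h N.
Proof. induction N; simpl; [auto|rewrite IHN; ring]. Qed.
Lemma zsumC_opp h N : zsumC (fun l => - h l) N = - zsumC h N.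
Proof. induction N; simpl; [auto|rewrite IHN; ring]. Qed.
Lemma zsumR_le h1 h2 N : (forall l, h1 l <= h2 l) -> zsumR h1 N <= zsumR h2 N.
Proof. intros H; induction N; [simpl; auto|]. pose proof (H (Z.of_nat (S N))); pose proof (H (- Z.of_nat (S N))%Z); simpl zsumR; simpl in *; lra. Qed.
Lemma zsumR_plus h1 h2 N : zsumR (fun l => h1 l + h2 l)%R N = (zsumR h1 N + zsumR h2 N)%R.
Proof. induction N; simpl; [auto|rewrite IHN; ring]. Qed.
Lemma zsumR_scal k h N : zsumR (fun l => k * h l)%R N = (k * zsumR h N)%R.
Proof. induction N; simpl; [auto|rewrite IHN; ring]. Qed.
Lemma Cmod_zsum h N : Cmod (zsumC h N) <= zsumR (fun l => Cmod (h l)) N.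
Proof.
  induction N; simpl; [lra|].
  eapply Rle_trans; [apply Cmod_triangle|].
  eapply Rle_trans; [apply Rplus_le_compat_r, Cmod_triangle|]. lra.
Qed.

Lemma zsumC_shift h N :
  zsumC (fun l => h (l + 1)%Z) N = zsumC h N - h (- Z.of_nat N)%Z + h (Z.of_nat N + 1)%Z.
Proof.
  induction N; cbn [zsumC].
  - simpl. ring.
  - rewrite IHN.
    replace (- Z.of_nat (S N) + 1)%Z with (- Z.of_nat N)%Z by lia.
    replace (Z.of_nat N + 1)%Z with (Z.of_nat (S N)) by lia.
    ring.
Qed.

Definition box (f : Z -> Z -> C) N := zsumC (fun l1 => zsumC (fun l2 => f l1 l2) N) N.
Definition boxR (f : Z -> Z -> R) N := zsumR (fun l1 => zsumR (fun l2 => f l1 l2) N) N.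

Lemma box_layer f N :
  box f (S N) = box f N
   + zsumC (fun l1 => f l1 (Z.of_nat (S N)) + f l1 (- Z.of_nat (S N))%Z) (S N)
   + zsumC (fun l2 => f (Z.of_nat (S N)) l2 + f (- Z.of_nat (S N))%Z l2) N.
Proof.
  unfold box.
  transitivity (zsumC (fun l1 => zsumC (fun l2 => f l1 l2) N
        + (f l1 (Z.of_nat (S N)) + f l1 (- Z.of_nat (S N))%Z)) (S N)).
  { apply zsumC_ext; intros; rewrite zsumC_S; ring. }
  rewrite zsumC_plus, (zsumC_S (fun l1 => zsumC (fun l2 => f l1 l2) N)), (zsumC_plus (fun l2 => f (Z.of_nat (S N)) l2) (fun l2 => f (- Z.of_nat (S N))%Z l2)). ring.
Qed.

Lemma boxR_layer f N :
  boxR f (S N) = (boxR f N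
   + zsumR (fun l1 => f l1 (Z.of_nat (S N)) + f l1 (- Z.of_nat (S N))%Z)%R (S N)
   + zsumR (fun l2 => f (Z.of_nat (S N)) l2 + f (- Z.of_nat (S N))%Z l2)%R N)%R.
Proof.
  unfold boxR.
  transitivity (zsumR (fun l1 => zsumR (fun l2 => f l1 l2) N
        + (f l1 (Z.of_nat (S N)) + f l1 (- Z.of_nat (S N))%Z))%R (S N)).
  { apply zsumR_ext; intros; rewrite zsumR_S; ring. }
  rewrite zsumR_plus, (zsumR_S (fun l1 => zsumR (fun l2 => f l1 l2) N)), (zsumR_plus (fun l2 => f (Z.of_nat (S N)) l2) (fun l2 => f (- Z.of_nat (S N))%Z l2)). ring.
Qed.
Open Scope R_scope.

Definition g (l : Z) : R := (/2) ^ (Z.abs_nat l).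
Lemma g_pos n : g (Z.of_nat n) = (/2)^n.
Proof. unfold g; now rewrite Zabs2Nat.id. Qed.
Lemma g_neg n : g (- Z.of_nat n)%Z = (/2)^n.
Proof. unfold g; f_equal; lia. Qed.
Lemma g_ge0 l : 0 <= g l.
Proof. unfold g; apply pow_le; lra. Qed.
Lemma half_pow_le1 n : 0 <= (/2)^n <= 1.
Proof. split; [apply pow_le; lra|]. induction n; simpl; lra. Qed.

Lemma zsumR_g N : zsumR g N = (3 - 2 * (/2)^N)%R.
Proof.
  induction N; [unfold g; simpl; lra|].
  rewrite zsumR_S, IHN, g_pos, g_neg. simpl. lra.
Qed.

Definition bounded (f : Z -> Z -> C) :=
  exists K, 0 <= K /\ forall l1 l2, Cmod (f l1 l2) <= K * g l1 * g l2.

Lemma zsum_bound_g h c N : 0 <= c -> (forall l, Cmod (h l) <= c * g l) ->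
  Cmod (zsumC h N) <= 3 * c.
Proof.
  intros Hc H. eapply Rle_trans; [apply Cmod_zsum|].
  eapply Rle_trans; [apply zsumR_le; apply H|].
  rewrite zsumR_scal, zsumR_g. pose proof (half_pow_le1 N). nra.
Qed.

Definition TB K N := (K * (3 - 2 * (/2)^N) * (3 - 2 * (/2)^N))%R.

Lemma boxR_G K N : boxR (fun l1 l2 => K * g l1 * g l2)%R N = TB K N.
Proof.
  unfold boxR, TB.
  rewrite (zsumR_ext _ (fun l1 => (K * g l1) * zsumR g N)%R).
  - rewrite (zsumR_ext _ (fun l1 => zsumR g N * (K * g l1))%R) by (intros; ring).
    rewrite zsumR_scal, zsumR_scal, zsumR_g. ring.
  - intros l. rewrite <- zsumR_scal. apply zsumR_ext; intros; ring.
Qed.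

Lemma layer_bound f K : (forall l1 l2, Cmod (f l1 l2) <= K * g l1 * g l2) -> forall N,
  Cmod (box f (S N) - box f N)%C <= TB K (S N) - TB K N.
Proof.
  intros H N. rewrite <- !boxR_G, boxR_layer, box_layer.
  replace (box f N + zsumC (fun l1 => f l1 (Z.of_nat (S N)) + f l1 (- Z.of_nat (S N))%Z) (S N)
    + zsumC (fun l2 => f (Z.of_nat (S N)) l2 + f (- Z.of_nat (S N))%Z l2) N - box f N)%C
    with (zsumC (fun l1 => f l1 (Z.of_nat (S N)) + f l1 (- Z.of_nat (S N))%Z)%C (S N)
    + zsumC (fun l2 => f (Z.of_nat (S N)) l2 + f (- Z.of_nat (S N))%Z l2)%C N)%C by ring.
  eapply Rle_trans; [apply Cmod_triangle|].
  match goal with |- _ <= ?x + ?y + ?z - _ => replace (x + y + z - x) with (y + z) by ring end.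
  apply Rplus_le_compat; (eapply Rle_trans; [apply Cmod_zsum|]); apply zsumR_le; intros;
    (eapply Rle_trans; [apply Cmod_triangle|]); apply Rplus_le_compat; apply H.
Qed.

Lemma TB_incr K N : 0 <= K -> TB K N <= TB K (S N).
Proof.
  intros HK. unfold TB. simpl. pose proof (half_pow_le1 N).
  set (x := (/2)^N) in *.
  assert (0 <= (3 - 2 * x) ) by lra.
  assert (3 - 2*x <= 3 - 2 * (/2 * x)) by lra.
  apply Rmult_le_compat; try nra.
Qed.

Lemma TB_mono K n k : 0 <= K -> TB K n <= TB K (k + n).
Proof.
  intros HK; induction k; simpl; [lra|]. eapply Rle_trans; [apply IHk|apply TB_incr; auto].
Qed.

Lemma box_cauchy_step f K : 0 <= K -> (forall l1 l2, Cmod (f l1 l2) <= K * g l1 * g l2) ->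
  forall m k, Cmod (box f (k + m) - box f m)%C <= TB K (k + m) - TB K m.
Proof.
  intros HK H m k. induction k.
  - simpl. replace (box f m - box f m)%C with (RtoC 0) by ring. rewrite Cmod_0. lra.
  - replace (box f (S k + m) - box f m)%C with
      ((box f (S (k + m)) - box f (k + m)) + (box f (k + m) - box f m))%C by (simpl; ring).
    eapply Rle_trans; [apply Cmod_triangle|].
    pose proof (layer_bound f K H (k + m)). simpl. lra.
Qed.

Lemma TB_cauchy K : 0 <= K -> ex_lim_seq_cauchy (TB K).
Proof.
  intros HK. apply ex_lim_seq_cauchy_corr.
  apply ex_finite_lim_seq_incr with (M := (9 * K)%R).
  - intros; apply TB_incr; auto.
  - intros n. unfold TB. pose proof (half_pow_le1 n). 
    set (x := (/2)^n) in *. assert (0 <= 3 - 2 * x <= 3) by lra.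
    set (y := 3 - 2 * x) in *. assert (y * y <= 9) by nra.
    rewrite Rmult_assoc. apply Rle_trans with (K * 9); [apply Rmult_le_compat_l; lra|lra].
Qed.

Lemma Re_diff (x y : C) : Re (x - y)%C = (Re x - Re y)%R.
Proof. destruct x, y; simpl; ring. Qed.
Lemma Im_diff (x y : C) : Im (x - y)%C = (Im x - Im y)%R.
Proof. destruct x, y; simpl; ring. Qed.
Lemma im_le_Cmod (z : C) : Rabs (Im z) <= Cmod z.
Proof. pose proof (Rmax_Cmod z). pose proof (Rmax_r (Rabs (fst z)) (Rabs (snd z))). unfold Im. lra. Qed.

Lemma box_conv f : bounded f ->
  ex_finite_lim_seq (fun N => Re (box f N)) /\ ex_finite_lim_seq (fun N => Im (box f N)).
Proof.
  intros [K [HK H]].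
  assert (Hc : forall n m, (m <= n)%nat -> Cmod (box f n - box f m)%C <= Rabs (TB K n - TB K m)).
  { intros n m Hmn. replace n with ((n - m) + m)%nat by lia.
    eapply Rle_trans; [apply (box_cauchy_step f K HK H)|]. apply Rle_abs. }
  assert (Hc' : forall n m, Cmod (box f n - box f m)%C <= Rabs (TB K n - TB K m)).
  { intros n m. destruct (le_lt_dec m n) as [h|h]; [apply Hc; auto|].
    replace (box f n - box f m)%C with (- (box f m - box f n))%C by ring.
    rewrite Cmod_opp, Rabs_minus_sym. apply Hc; lia. }
  pose proof (TB_cauchy K HK) as HT.
  split; apply ex_lim_seq_cauchy_corr; intros eps; destruct (HT eps) as [N HN];
    exists N; intros n m Hn Hm; specialize (HN n m Hn Hm).
  - rewrite <- Re_diff. eapply Rle_lt_trans; [apply re_le_Cmod|]. eapply Rle_lt_trans; [apply Hc'|]. auto.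
  - rewrite <- Im_diff. eapply Rle_lt_trans; [apply im_le_Cmod|]. eapply Rle_lt_trans; [apply Hc'|]. auto.
Qed.

Definition V (f : Z -> Z -> C) : C :=
  (real (Lim_seq (fun N => Re (box f N))), real (Lim_seq (fun N => Im (box f N)))).

Lemma V_lim f : bounded f ->
  is_lim_seq (fun N => Re (box f N)) (Re (V f)) /\ is_lim_seq (fun N => Im (box f N)) (Im (V f)).
Proof.
  intros Hb. destruct (box_conv f Hb) as [H1 H2]. split; apply Lim_seq_correct'; auto.
Qed.

Lemma V_from_lim f x : is_lim_seq (fun N => Re (box f N)) (Re x) ->
  is_lim_seq (fun N => Im (box f N)) (Im x) -> V f = x.
Proof.
  intros H1 H2. unfold V. rewrite (is_lim_seq_unique _ _ H1), (is_lim_seq_unique _ _ H2).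
  destruct x; reflexivity.
Qed.

Lemma box_scal f k N : box (fun l1 l2 => k * f l1 l2)%C N = (k * box f N)%C.
Proof.
  unfold box. rewrite <- zsumC_scal. apply zsumC_ext; intros. apply zsumC_scal.
Qed.
Lemma box_ext f1 f2 N : (forall l1 l2, f1 l1 l2 = f2 l1 l2) -> box f1 N = box f2 N.
Proof. intros H; unfold box; apply zsumC_ext; intros; apply zsumC_ext; intros; apply H. Qed.

Lemma Re_mul (k z : C) : Re (k * z)%C = (Re k * Re z - Im k * Im z)%R.
Proof. destruct k, z; simpl; ring. Qed.
Lemma Im_mul (k z : C) : Im (k * z)%C = (Re k * Im z + Im k * Re z)%R.
Proof. destruct k, z; simpl; ring. Qed.

Lemma V_scal f f' k : bounded f -> (forall l1 l2, f' l1 l2 = k * f l1 l2)%C -> V f' = (k * V f)%C.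
Proof.
  intros Hb Hf. destruct (V_lim f Hb) as [H1 H2].
  assert (Hbox : forall N, box f' N = (k * box f N)%C).
  { intros N. rewrite (box_ext f' (fun l1 l2 => k * f l1 l2)%C N Hf), box_scal. auto. }
  apply V_from_lim.
  - eapply is_lim_seq_ext.
    { intros N. rewrite Hbox, Re_mul. reflexivity. }
    rewrite Re_mul. set (x := Re (V f)) in *. set (y := Im (V f)) in *. clearbody x y.
    apply is_lim_seq_plus'.
    + apply (is_lim_seq_scal_l _ (Re k) (Finite x)); auto.
    + apply (is_lim_seq_scal_l _ (- Im k) (Finite y)) in H2. simpl in H2.
      replace (- (Im k * y)) with (- Im k * y) by ring.
      eapply is_lim_seq_ext; [|exact H2]. intros; unfold Im; ring.
  - eapply is_lim_seq_ext.
    { intros N. rewrite Hbox, Im_mul. reflexivity. }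
    rewrite Im_mul. apply is_lim_seq_plus'.
    + apply (is_lim_seq_scal_l _ (Re k) (Finite (Im (V f)))); auto.
    + apply (is_lim_seq_scal_l _ (Im k) (Finite (Re (V f)))); auto.
Qed.

Lemma V_ext f f' : bounded f -> (forall l1 l2, f' l1 l2 = f l1 l2) -> V f' = V f.
Proof.
  intros Hb Hf. rewrite (V_scal f f' 1); auto. ring. intros; rewrite Hf; ring.
Qed.

Lemma V_close f f' e : bounded f -> (forall N, Cmod (box f' N - box f N)%C <= e N) ->
  is_lim_seq e 0 -> V f' = V f.
Proof.
  intros Hb Hd He. destruct (V_lim f Hb) as [H1 H2].
  assert (He' : is_lim_seq (fun N => - e N) 0).
  { apply is_lim_seq_opp in He. simpl in He. replace 0 with (-0) by ring. auto. }
  apply V_from_lim.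
  - eapply is_lim_seq_ext with (u := fun N => Re (box f N) + Re (box f' N - box f N)%C).
    { intros; rewrite Re_diff; ring. }
    replace (Re (V f)) with (Re (V f) + 0) by ring. apply is_lim_seq_plus'; auto.
    apply is_lim_seq_le_le with (u := fun N => - e N) (w := e); auto.
    intros m. apply Rabs_le_between. eapply Rle_trans; [apply re_le_Cmod | apply Hd].
  - eapply is_lim_seq_ext with (u := fun N => Im (box f N) + Im (box f' N - box f N)%C).
    { intros; rewrite Im_diff; ring. }
    replace (Im (V f)) with (Im (V f) + 0) by ring. apply is_lim_seq_plus'; auto.
    apply is_lim_seq_le_le with (u := fun N => - e N) (w := e); auto.
    intros m. apply Rabs_le_between. eapply Rle_trans; [apply im_le_Cmod | apply Hd].
Qed.

Lemma zsumC_minus h1 h2 N : zsumC (fun l => h1 l - h2 l)%C N = (zsumC h1 N - zsumC h2 N)%C.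
Proof. induction N; [simpl; auto|rewrite !zsumC_S, IHN; ring]. Qed.

Lemma Cmod_minus_le (x y : C) : Cmod (x - y)%C <= Cmod x + Cmod y.
Proof. eapply Rle_trans; [apply Cmod_triangle|]. rewrite Cmod_opp. lra. Qed.

Lemma e_lim K : is_lim_seq (fun N => 3 * (K * (/2)^(S N) + K * (/2)^N)) 0.
Proof.
  eapply is_lim_seq_ext with (u := fun N => (9/2 * K) * (/2)^N).
  { intros; simpl; field. }
  replace 0 with (9/2 * K * 0) by ring.
  apply (is_lim_seq_scal_l _ (9/2*K) (Finite 0)). apply is_lim_seq_geom.
  rewrite Rabs_pos_eq; lra.
Qed.

Lemma diff_bound f K A B N : 0 <= K -> (forall l1 l2, Cmod (f l1 l2) <= K * g l1 * g l2) ->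
  Cmod (zsumC (fun l => f A l - f B l)%C N) <= 3 * (K * g A + K * g B).
Proof.
  intros HK H. apply zsum_bound_g.
  - pose proof (g_ge0 A); pose proof (g_ge0 B). apply Rplus_le_le_0_compat; apply Rmult_le_pos; auto.
  - intros l. eapply Rle_trans; [apply Cmod_minus_le|]. pose proof (H A l); pose proof (H B l). lra.
Qed.
Lemma diff_bound' f K A B N : 0 <= K -> (forall l1 l2, Cmod (f l1 l2) <= K * g l1 * g l2) ->
  Cmod (zsumC (fun l => f l A - f l B)%C N) <= 3 * (K * g A + K * g B).
Proof.
  intros HK H. apply zsum_bound_g.
  - pose proof (g_ge0 A); pose proof (g_ge0 B). apply Rplus_le_le_0_compat; apply Rmult_le_pos; auto.
  - intros l. eapply Rle_trans; [apply Cmod_minus_le|]. pose proof (H l A); pose proof (H l B).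
    pose proof (g_ge0 l). lra.
Qed.

Lemma V_shift1 f : bounded f -> V (fun l1 l2 => f (l1 + 1)%Z l2) = V f.
Proof.
  intros Hb. pose proof Hb as [K [HK H]].
  apply (V_close f _ (fun N => 3 * (K * (/2)^(S N) + K * (/2)^N))); auto; [|apply e_lim].
  intros N.
  assert (E : (box (fun l1 l2 => f (l1 + 1)%Z l2) N - box f N)%C =
     zsumC (fun l => f (Z.of_nat N + 1)%Z l - f (- Z.of_nat N)%Z l)%C N).
  { unfold box. pose proof (zsumC_shift (fun l1 => zsumC (fun l2 => f l1 l2) N) N) as E.
    cbv beta in E. rewrite E, (zsumC_minus (fun l => f (Z.of_nat N + 1)%Z l) (fun l => f (- Z.of_nat N)%Z l)). ring. }
  rewrite E. eapply Rle_trans; [apply diff_bound; eauto|].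
  replace (Z.of_nat N + 1)%Z with (Z.of_nat (S N)) by lia. rewrite g_pos, g_neg. lra.
Qed.

Lemma V_shift2 f : bounded f -> V (fun l1 l2 => f l1 (l2 + 1)%Z) = V f.
Proof.
  intros Hb. pose proof Hb as [K [HK H]].
  apply (V_close f _ (fun N => 3 * (K * (/2)^(S N) + K * (/2)^N))); auto; [|apply e_lim].
  intros N.
  assert (E : (box (fun l1 l2 => f l1 (l2 + 1)%Z) N - box f N)%C =
     zsumC (fun l => f l (Z.of_nat N + 1)%Z - f l (- Z.of_nat N)%Z)%C N).
  { unfold box.
    rewrite (zsumC_ext _ (fun l1 => zsumC (fun l2 => f l1 l2) N - f l1 (- Z.of_nat N)%Z + f l1 (Z.of_nat N + 1)%Z)%C).
    - rewrite zsumC_plus, zsumC_minus, zsumC_minus. ring.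
    - intros l1. apply (zsumC_shift (fun l2 => f l1 l2) N). }
  rewrite E. eapply Rle_trans; [apply diff_bound'; eauto|].
  replace (Z.of_nat N + 1)%Z with (Z.of_nat (S N)) by lia. rewrite g_pos, g_neg. lra.
Qed.

Lemma sum_shift (h : Z -> C) n a :
  sum_n (fun i => h (Z.of_nat i + a)%Z) (S n) = (h a + sum_n (fun i => h (Z.of_nat i + (a + 1))%Z) n)%C.
Proof.
  revert a. induction n; intros a.
  - rewrite sum_Sn, !sum_O. simpl. replace (a + 1)%Z with (Z.pos 1 + a)%Z by lia. reflexivity.
  - rewrite sum_Sn, IHn, (sum_Sn _ n).
    replace (Z.of_nat (S (S n)) + a)%Z with (Z.of_nat (S n) + (a + 1))%Z by lia.
    change plus with Cplus. rewrite Cplus_assoc. reflexivity.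
Qed.

Lemma sum_conv h N : sum_n (fun i => h (Z.of_nat i - Z.of_nat N)%Z) (2 * N) = zsumC h N.
Proof.
  induction N.
  - simpl. rewrite sum_O. reflexivity.
  - replace (2 * S N)%nat with (S (S (2*N))) by lia. rewrite sum_Sn.
    rewrite (sum_n_ext _ (fun i => h (Z.of_nat i + (- Z.of_nat (S N)))%Z)) by (intros; f_equal; lia).
    rewrite sum_shift.
    rewrite (sum_n_ext _ (fun i => h (Z.of_nat i - Z.of_nat N)%Z)) by (intros; f_equal; lia).
    rewrite IHN, zsumC_S.
    replace (Z.of_nat (S (S (2*N))) - Z.of_nat (S N))%Z with (Z.of_nat (S N)) by lia.
    change plus with Cplus.
    match goal with |- ?x = ?y => change (@eq C x y) end. ring.
Qed.

Lemma theta_partial_box a b c c1 c2 v N :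
  theta_partial a b c c1 c2 v N = box (fun l1 l2 => theta_term a b c c1 c2 v (l1, l2)) N.
Proof.
  unfold theta_partial, box.
  rewrite (sum_n_ext _ (fun i => zsumC (fun l2 => theta_term a b c c1 c2 v ((Z.of_nat i - Z.of_nat N)%Z, l2)) N)).
  - exact (sum_conv (fun l1 => zsumC (fun l2 => theta_term a b c c1 c2 v (l1, l2)) N) N).
  - intros i. exact (sum_conv (fun l2 => theta_term a b c c1 c2 v ((Z.of_nat i - Z.of_nat N)%Z, l2)) N).
Qed.

Definition Tf a b c c1 v : Z -> Z -> C := fun l1 l2 => theta_term a b c c1 (0%R, 0%R) v (l1, l2).

Lemma theta_V a b c c1 v : theta a b c c1 (0%R, 0%R) v = V (Tf a b c c1 v).
Proof.
  unfold theta, V. f_equal; f_equal; apply Lim_seq_ext; intros; rewrite theta_partial_box; reflexivity.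
Qed.

Lemma Cmod_cexp z : Cmod (cexp z) = exp (Re z).
Proof.
  unfold Cmod, cexp; cbn [fst snd].
  replace ((exp (Re z) * cos (Im z)) ^ 2 + (exp (Re z) * sin (Im z)) ^ 2)
    with ((exp (Re z)) ^ 2 * ((sin (Im z))² + (cos (Im z))²)) by (unfold Rsqr; ring).
  rewrite sin2_cos2, Rmult_1_r. apply sqrt_pow2. left; apply exp_pos.
Qed.

Lemma cexp_add x y : cexp (x + y)%C = (cexp x * cexp y)%C.
Proof.
  destruct x as [x1 x2], y as [y1 y2]. unfold cexp; simpl.
  rewrite exp_plus, cos_plus, sin_plus. apply injective_projections; simpl; ring.
Qed.

Lemma cexp_neq0 z : cexp z <> 0%C.
Proof.
  intros H. unfold cexp in H. injection H as H1 H2.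
  pose proof (exp_pos (Re z)).
  apply (cos_sin_0 (Im z)). split.
  - apply (Rmult_eq_reg_l (exp (Re z))); [rewrite H1; ring|lra].
  - apply (Rmult_eq_reg_l (exp (Re z))); [rewrite H2; ring|lra].
Qed.

Lemma trig_nat n : cos (2 * PI * INR n) = 1 /\ sin (2 * PI * INR n) = 0.
Proof.
  pose proof (cos_period 0 n); pose proof (sin_period 0 n).
  rewrite Rplus_0_l, cos_0 in *. rewrite sin_0 in *.
  replace (2 * PI * INR n) with (2 * INR n * PI) by ring. auto.
Qed.

Lemma trig_int k : cos (2 * PI * IZR k) = 1 /\ sin (2 * PI * IZR k) = 0.
Proof.
  destruct k as [|p|p].
  - simpl. rewrite Rmult_0_r, cos_0, sin_0. auto.
  - replace (IZR (Z.pos p)) with (INR (Pos.to_nat p)) by (rewrite INR_IZR_INZ, positive_nat_Z; reflexivity). apply trig_nat.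
  - rewrite IZR_NEG. replace (IZR (Z.pos p)) with (INR (Pos.to_nat p)) by (rewrite INR_IZR_INZ, positive_nat_Z; reflexivity).
    replace (2 * PI * - INR (Pos.to_nat p)) with (- (2 * PI * INR (Pos.to_nat p))) by ring.
    rewrite cos_neg, sin_neg. destruct (trig_nat (Pos.to_nat p)) as [-> ->]. split; ring.
Qed.

Lemma cexp_int z k : Re z = IZR k -> Im z = 0 -> cexp (RtoC (2 * PI) * Ci * z)%C = 1%C.
Proof.
  destruct z as [x y]; simpl; intros -> ->.
  unfold cexp; simpl.
  replace ((2 * PI * 0 - 0 * 1) * IZR k - (2 * PI * 1 + 0 * 0) * 0) with 0 by ring.
  replace ((2 * PI * 0 - 0 * 1) * 0 + (2 * PI * 1 + 0 * 0) * IZR k) with (2 * PI * IZR k) by ring.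
  destruct (trig_int k) as [-> ->]. rewrite exp_0. apply injective_projections; simpl; ring.
Qed.

Lemma cexp_half z k : Re z = IZR k + /2 -> Im z = 0 -> cexp (RtoC (2 * PI) * Ci * z)%C = (-1)%C.
Proof.
  destruct z as [x y]; simpl; intros -> ->.
  unfold cexp; simpl.
  replace ((2 * PI * 0 - 0 * 1) * (IZR k + /2) - (2 * PI * 1 + 0 * 0) * 0) with 0 by ring.
  replace ((2 * PI * 0 - 0 * 1) * 0 + (2 * PI * 1 + 0 * 0) * (IZR k + /2)) with (2 * PI * IZR k + PI) by field.
  rewrite cos_plus, sin_plus, cos_PI, sin_PI.
  destruct (trig_int k) as [-> ->]. rewrite exp_0. apply injective_projections; simpl; ring.
Qed.

Lemma Tf_mod a b c c1 v l1 l2 :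
  Cmod (Tf a b c c1 v l1 l2) =
  exp (- PI * (Im a * (IZR l1 + fst c1)^2 + 2 * Im b * (IZR l1 + fst c1) * (IZR l2 + snd c1)
               + Im c * (IZR l2 + snd c1)^2)
       - 2 * PI * ((IZR l1 + fst c1) * Im (fst v) + (IZR l2 + snd c1) * Im (snd v))).
Proof.
  unfold Tf, theta_term. rewrite Cmod_cexp. f_equal.
  destruct a, b, c, v as [[v1 v2] [v3 v4]], c1. simpl. ring.
Qed.

Lemma quad_le A B x : 0 < A -> - A * x^2 + B * x <= B * B / (4 * A).
Proof.
  intros HA. set (t := B * B / (4 * A)).
  assert (Ht : t * (4 * A) = B * B) by (unfold t; field; lra).
  assert (0 <= (2 * A * x - B)^2) by (apply pow2_ge_0).
  nra.
Qed.

Lemma exp_half n : exp (- INR n) <= (/2)^n.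
Proof.
  induction n.
  - simpl. rewrite Ropp_0, exp_0. lra.
  - rewrite S_INR. replace (- (INR n + 1)) with (- INR n + - (1)) by ring.
    rewrite exp_plus, (exp_Ropp 1). simpl.
    assert (2 < exp 1) by (pose proof (exp_ineq1 1 ltac:(lra)); lra).
    assert (/ exp 1 <= /2) by (apply Rinv_le_contravar; lra).
    pose proof (exp_pos (- INR n)). pose proof (Rinv_0_lt_compat (exp 1) ltac:(pose proof (exp_pos 1); lra)).
    rewrite Rmult_comm. apply Rmult_le_compat; lra.
Qed.

Lemma abs_nat_R l : INR (Z.abs_nat l) = Rabs (IZR l).
Proof. rewrite INR_IZR_INZ, Zabs2Nat.id_abs, abs_IZR. reflexivity. Qed.

Lemma coord_bound A B u cc (l : Z) : 0 < A -> 0 <= B -> u = IZR l + cc ->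
  - A * u^2 + B * Rabs u + Rabs (IZR l) <= (B + 1) * (B + 1) / (4 * A) + Rabs cc.
Proof.
  intros HA HB Hu.
  assert (Rabs (IZR l) <= Rabs u + Rabs cc).
  { replace (IZR l) with (u + - cc) by lra. eapply Rle_trans; [apply Rabs_triang|]. rewrite Rabs_Ropp. lra. }
  pose proof (quad_le A (B + 1) (Rabs u) HA).
  rewrite <- (pow2_abs u). lra.
Qed.

Lemma Tf_bounded a b c c1 v : siegel2 a b c -> bounded (Tf a b c c1 v).
Proof.
  intros [Hp Hd].
  set (p := Im a) in *. set (q := Im b) in *. set (r := Im c) in *.
  assert (Hr : 0 < r) by nra.
  set (lam := (p * r - q * q) / (p + r)).
  assert (Hlam : 0 < lam) by (unfold lam; apply Rdiv_lt_0_compat; lra).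
  set (A := PI * lam). assert (HA : 0 < A) by (unfold A; pose proof PI_RGT_0; nra).
  set (B1 := 2 * PI * Rabs (Im (fst v))). set (B2 := 2 * PI * Rabs (Im (snd v))).
  assert (HB1 : 0 <= B1) by (unfold B1; pose proof PI_RGT_0; pose proof (Rabs_pos (Im (fst v))); nra).
  assert (HB2 : 0 <= B2) by (unfold B2; pose proof PI_RGT_0; pose proof (Rabs_pos (Im (snd v))); nra).
  set (M := ((B1 + 1) * (B1 + 1) / (4 * A) + Rabs (fst c1)) + ((B2 + 1) * (B2 + 1) / (4 * A) + Rabs (snd c1))).
  exists (exp M). split; [left; apply exp_pos|].
  intros l1 l2. rewrite Tf_mod. fold p q r.
  set (u1 := IZR l1 + fst c1). set (u2 := IZR l2 + snd c1).
  assert (HQ : lam * (u1^2 + u2^2) <= p * u1^2 + 2 * q * u1 * u2 + r * u2^2).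
  { unfold lam. apply (Rmult_le_reg_l (p + r)); [lra|].
    replace ((p + r) * ((p * r - q * q) / (p + r) * (u1 ^ 2 + u2 ^ 2))) with ((p * r - q * q) * (u1 ^ 2 + u2 ^ 2)) by (field; lra).
    assert (0 <= (p * u1 + q * u2)^2 + (q * u1 + r * u2)^2) by (pose proof (pow2_ge_0 (p * u1 + q * u2)); pose proof (pow2_ge_0 (q * u1 + r * u2)); lra).
    nra. }
  assert (HL : - 2 * PI * (u1 * Im (fst v) + u2 * Im (snd v)) <= B1 * Rabs u1 + B2 * Rabs u2).
  { unfold B1, B2. pose proof PI_RGT_0.
    assert (- (u1 * Im (fst v)) <= Rabs u1 * Rabs (Im (fst v))) by (rewrite <- Rabs_mult; rewrite <- Rabs_Ropp; apply Rle_abs).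
    assert (- (u2 * Im (snd v)) <= Rabs u2 * Rabs (Im (snd v))) by (rewrite <- Rabs_mult; rewrite <- Rabs_Ropp; apply Rle_abs).
    nra. }
  pose proof (coord_bound A B1 u1 (fst c1) l1 HA HB1 eq_refl).
  pose proof (coord_bound A B2 u2 (snd c1) l2 HA HB2 eq_refl).
  assert (HE : - PI * (p * u1 ^ 2 + 2 * q * u1 * u2 + r * u2 ^ 2) - 2 * PI * (u1 * Im (fst v) + u2 * Im (snd v))
     <= M + - INR (Z.abs_nat l1) + - INR (Z.abs_nat l2)).
  { rewrite !abs_nat_R. unfold M. fold u1 u2.
    assert (- PI * (p * u1 ^ 2 + 2 * q * u1 * u2 + r * u2 ^ 2) <= - A * u1^2 - A * u2^2).
    { unfold A. pose proof PI_RGT_0. nra. }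
    lra. }
  eapply Rle_trans.
  { destruct HE as [HE|HE]; [left; apply exp_increasing; exact HE|rewrite HE; right; reflexivity]. }
  rewrite !exp_plus. unfold g.
  pose proof (exp_half (Z.abs_nat l1)). pose proof (exp_half (Z.abs_nat l2)).
  pose proof (exp_pos M). pose proof (exp_pos (- INR (Z.abs_nat l1))). pose proof (exp_pos (- INR (Z.abs_nat l2))).
  apply Rmult_le_compat; try (apply Rmult_le_pos); try lra.
  apply Rmult_le_compat; lra.
Qed.

Definition TH a b c c1 w := theta a b c c1 (0%R, 0%R) w.
Definition Zv (a b c : C) (x1 x2 : R) : C * C :=
  (a * RtoC x1 + b * RtoC x2, b * RtoC x1 + c * RtoC x2)%C.

Lemma Tf_shift1 a b c x y w l1 l2 : Tf a b c (x + 1, y) w l1 l2 = Tf a b c (x, y) w (l1 + 1)%Z l2.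
Proof.
  unfold Tf, theta_term; cbn [fst snd].
  replace (IZR l1 + (x + 1)) with (IZR (l1 + 1) + x) by (rewrite plus_IZR; ring). reflexivity.
Qed.
Lemma Tf_shift2 a b c x y w l1 l2 : Tf a b c (x, y + 1) w l1 l2 = Tf a b c (x, y) w l1 (l2 + 1)%Z.
Proof.
  unfold Tf, theta_term; cbn [fst snd].
  replace (IZR l2 + (y + 1)) with (IZR (l2 + 1) + y) by (rewrite plus_IZR; ring). reflexivity.
Qed.

Lemma TH_shift1 a b c x y w : siegel2 a b c -> TH a b c (x + 1, y) w = TH a b c (x, y) w.
Proof.
  intros Hs. unfold TH. rewrite !theta_V.
  rewrite <- (V_ext (Tf a b c (x + 1, y) w) (fun l1 l2 => Tf a b c (x, y) w (l1 + 1)%Z l2)).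
  - apply V_shift1, Tf_bounded, Hs.
  - apply Tf_bounded, Hs.
  - intros; symmetry; apply Tf_shift1.
Qed.
Lemma TH_shift2 a b c x y w : siegel2 a b c -> TH a b c (x, y + 1) w = TH a b c (x, y) w.
Proof.
  intros Hs. unfold TH. rewrite !theta_V.
  rewrite <- (V_ext (Tf a b c (x, y + 1) w) (fun l1 l2 => Tf a b c (x, y) w l1 (l2 + 1)%Z)).
  - apply V_shift2, Tf_bounded, Hs.
  - apply Tf_bounded, Hs.
  - intros; symmetry; apply Tf_shift2.
Qed.

Lemma TH_int1 a b c y w k : siegel2 a b c -> forall x, TH a b c (x + IZR k, y) w = TH a b c (x, y) w.
Proof.
  intros Hs. induction k using Z.peano_ind; intros x.
  - rewrite Rplus_0_r. reflexivity.
  - rewrite succ_IZR, <- Rplus_assoc, TH_shift1; auto.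
  - rewrite <- (IHk x). rewrite <- (TH_shift1 a b c (x + IZR (Z.pred k))); auto.
    f_equal. f_equal. rewrite <- Z.sub_1_r, minus_IZR. ring.
Qed.
Lemma TH_int2 a b c x w k : siegel2 a b c -> forall y, TH a b c (x, y + IZR k) w = TH a b c (x, y) w.
Proof.
  intros Hs. induction k using Z.peano_ind; intros y.
  - rewrite Rplus_0_r. reflexivity.
  - rewrite succ_IZR, <- Rplus_assoc, TH_shift2; auto.
  - rewrite <- (IHk y). rewrite <- (TH_shift2 a b c x (y + IZR (Z.pred k))); auto.
    f_equal. f_equal. rewrite <- Z.sub_1_r, minus_IZR. ring.
Qed.
Lemma TH_int a b c x y w k1 k2 : siegel2 a b c ->
  TH a b c (x + IZR k1, y + IZR k2) w = TH a b c (x, y) w.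
Proof. intros Hs. rewrite TH_int1, TH_int2; auto. Qed.

Definition FZ (a b c : C) (x1 x2 : R) (w : C * C) : C :=
  (- (RtoC PI * Ci * (RtoC x1 * (a * RtoC x1 + b * RtoC x2) + RtoC x2 * (b * RtoC x1 + c * RtoC x2)))
   - RtoC (2 * PI) * Ci * (RtoC x1 * fst w + RtoC x2 * snd w))%C.

Lemma Tf_Z a b c c1 w x1 x2 l1 l2 :
  Tf a b c c1 (vadd w (Zv a b c x1 x2)) l1 l2 =
  (cexp (FZ a b c x1 x2 w) * Tf a b c ((fst c1 + x1)%R, (snd c1 + x2)%R) w l1 l2)%C.
Proof.
  unfold Tf, theta_term, vadd, Zv, FZ. cbn [fst snd]. rewrite <- cexp_add. f_equal.
  rewrite !RtoC_plus, !RtoC_mult. ring.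
Qed.

Lemma Tf_R a b c c1 w y1 y2 l1 l2 :
  Tf a b c c1 (vadd w (RtoC y1, RtoC y2)) l1 l2 =
  (Tf a b c c1 w l1 l2 * cexp (RtoC (2 * PI) * Ci *
     (RtoC (IZR l1 + fst c1) * RtoC y1 + RtoC (IZR l2 + snd c1) * RtoC y2)))%C.
Proof.
  unfold Tf, theta_term, vadd. cbn [fst snd]. rewrite <- cexp_add. f_equal. ring.
Qed.

Lemma TH_M a b c x y t m1 m2 w : siegel2 a b c -> x = 0 -> 4 * y = 2 * IZR t + 1 ->
  TH a b c (x, y) (vadd w (RtoC (IZR m1), RtoC (4 * IZR m2))) = TH a b c (x, y) w.
Proof.
  intros Hs Hx Hy. unfold TH. rewrite !theta_V. apply V_ext; [apply Tf_bounded, Hs|].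
  intros l1 l2. rewrite Tf_R.
  rewrite (cexp_int _ (l1 * m1 + 4 * l2 * m2 + (2 * t + 1) * m2)).
  - ring.
  - repeat (rewrite plus_IZR || rewrite mult_IZR). cbn [Re fst snd Cplus Cmult RtoC].
    assert (y = (2 * IZR t + 1) / 4) by lra. subst. field.
  - simpl. ring.
Qed.

Lemma TH_2 a b c x y t w : siegel2 a b c -> x = 0 -> 4 * y = 2 * IZR t + 1 ->
  TH a b c (x, y) (vadd w (RtoC 0, RtoC 2)) = (- TH a b c (x, y) w)%C.
Proof.
  intros Hs Hx Hy. unfold TH. rewrite !theta_V.
  rewrite (V_scal (Tf a b c (x, y) w) _ (-1)%C); [ring|apply Tf_bounded, Hs|].
  intros l1 l2. rewrite Tf_R.
  rewrite (cexp_half _ (2 * l2 + t)).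
  - ring.
  - repeat (rewrite plus_IZR || rewrite mult_IZR). cbn [Re fst snd Cplus Cmult RtoC].
    assert (y = (2 * IZR t + 1) / 4) by lra. subst. field.
  - simpl. ring.
Qed.

Lemma TH_Zn a b c x y n1 n2 w : siegel2 a b c ->
  TH a b c (x, y) (vadd w (Zv a b c (IZR n1) (IZR n2))) =
  (cexp (FZ a b c (IZR n1) (IZR n2) w) * TH a b c (x, y) w)%C.
Proof.
  intros Hs. rewrite <- (TH_int a b c x y w n1 n2 Hs). unfold TH. rewrite !theta_V.
  apply V_scal; [apply Tf_bounded, Hs|]. intros; apply Tf_Z.
Qed.

Lemma TH_h a b c x y w : siegel2 a b c ->
  TH a b c (x, y) (vadd w (Zv a b c 0 (/2))) =
  (cexp (FZ a b c 0 (/2) w) * TH a b c ((x + 0)%R, (y + /2)%R) w)%C.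
Proof.
  intros Hs. unfold TH. rewrite !theta_V.
  apply V_scal; [apply Tf_bounded, Hs|]. intros; apply Tf_Z.
Qed.

Lemma TA_eq a b c w : theta_A a b c w =
  (TH a b c ((3 * 0)%R, (3 * (1/4))%R) w - TH a b c (0%R, (1/4)%R) w)%C.
Proof. reflexivity. Qed.

Definition Inv a b c (u : C * C) := forall w, exists k : C, k <> 0%C /\
  theta_A a b c (vadd w u) = (k * theta_A a b c w)%C.

Lemma C1_neq0 : (1 : C) <> 0%C.
Proof. intros H. injection H. lra. Qed.
Lemma Cm1_neq0 : (-1 : C) <> 0%C.
Proof. intros H. injection H. lra. Qed.
Lemma Cmul_neq0 (x y : C) : x <> 0%C -> y <> 0%C -> (x * y)%C <> 0%C.
Proof.
  intros Hx Hy H. apply Hy. replace y with (/ x * (x * y))%C by (field; auto).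
  rewrite H. ring.
Qed.

Lemma Inv_M a b c m1 m2 : siegel2 a b c -> Inv a b c (RtoC (IZR m1), RtoC (4 * IZR m2)).
Proof.
  intros Hs w. exists 1%C. split; [apply C1_neq0|].
  rewrite !TA_eq, (TH_M _ _ _ _ _ 1), (TH_M _ _ _ _ _ 0); auto; try lra. ring.
Qed.

Lemma Inv_2 a b c : siegel2 a b c -> Inv a b c (RtoC 0, RtoC 2).
Proof.
  intros Hs w. exists (-1)%C. split; [apply Cm1_neq0|].
  rewrite !TA_eq, (TH_2 _ _ _ _ _ 1), (TH_2 _ _ _ _ _ 0); auto; try lra. ring.
Qed.

Lemma Inv_Zn a b c n1 n2 : siegel2 a b c -> Inv a b c (Zv a b c (IZR n1) (IZR n2)).
Proof.
  intros Hs w. exists (cexp (FZ a b c (IZR n1) (IZR n2) w)). split; [apply cexp_neq0|].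
  rewrite !TA_eq, !TH_Zn; auto. ring.
Qed.

Lemma Inv_h a b c : siegel2 a b c -> Inv a b c (Zv a b c 0 (/2)).
Proof.
  intros Hs w. exists (- cexp (FZ a b c 0 (/2) w))%C. split.
  { intros H. apply (cexp_neq0 (FZ a b c 0 (/2) w)). replace (cexp (FZ a b c 0 (/ 2) w)) with (- (- cexp (FZ a b c 0 (/ 2) w)))%C by ring. rewrite H. ring. }
  rewrite !TA_eq, !TH_h; auto.
  replace ((3 * 0 + 0)%R, (3 * (1 / 4) + / 2)%R) with ((0 + IZR 0)%R, (1/4 + IZR 1)%R) by (f_equal; simpl; lra).
  rewrite TH_int; auto.
  replace ((0 + 0)%R, (1 / 4 + / 2)%R) with ((3 * 0)%R, (3 * (1/4))%R) by (f_equal; lra).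
  ring.
Qed.

Lemma vadd_assoc (u v w : C * C) : vadd u (vadd v w) = vadd (vadd u v) w.
Proof. unfold vadd; simpl; f_equal; ring. Qed.

Lemma Inv_add a b c u1 u2 : Inv a b c u1 -> Inv a b c u2 -> Inv a b c (vadd u1 u2).
Proof.
  intros H1 H2 w. destruct (H1 w) as [k1 [Hk1 E1]]. destruct (H2 (vadd w u1)) as [k2 [Hk2 E2]].
  exists (k2 * k1)%C. split; [apply Cmul_neq0; auto|].
  rewrite vadd_assoc, E2, E1. ring.
Qed.

Lemma Inv_0 a b c : Inv a b c (RtoC 0, RtoC 0).
Proof.
  intros w. exists 1%C. split; [apply C1_neq0|].
  replace (vadd w (RtoC 0, RtoC 0)) with w by (destruct w; unfold vadd; simpl; f_equal; ring). ring.
Qed.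

Lemma Inv_CA a b c u : Inv a b c u -> forall w, C_A a b c (vadd w u) <-> C_A a b c w.
Proof.
  intros H w. destruct (H w) as [k [Hk E]]. unfold C_A. rewrite E. split; intros H'.
  - replace (theta_A a b c w) with (/ k * (k * theta_A a b c w))%C by (field; auto).
    rewrite H'. ring.
  - rewrite H'. ring.
Qed.

Definition cv (a b c : C) (x1 x2 y1 y2 : R) : C * C := vadd (Zv a b c x1 x2) (RtoC y1, RtoC y2).

Lemma cv_add a b c x1 x2 y1 y2 x1' x2' y1' y2' :
  vadd (cv a b c x1 x2 y1 y2) (cv a b c x1' x2' y1' y2') =
  cv a b c (x1 + x1') (x2 + x2') (y1 + y1') (y2 + y2').
Proof. unfold cv, vadd, Zv; cbn [fst snd]; f_equal; rewrite !RtoC_plus; ring. Qed.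
Lemma cv_sub a b c x1 x2 y1 y2 x1' x2' y1' y2' :
  vsub (cv a b c x1 x2 y1 y2) (cv a b c x1' x2' y1' y2') =
  cv a b c (x1 - x1') (x2 - x2') (y1 - y1') (y2 - y2').
Proof. unfold cv, vsub, vadd, Zv; cbn [fst snd]; f_equal; rewrite !RtoC_minus; ring. Qed.
Lemma cv_scal a b c x1 x2 y1 y2 :
  vscal 2 (cv a b c x1 x2 y1 y2) = cv a b c (2 * x1) (2 * x2) (2 * y1) (2 * y2).
Proof. unfold cv, vscal, vadd, Zv; cbn [fst snd]; f_equal; rewrite !RtoC_mult; ring. Qed.
Lemma cv_ext a b c x1 x2 y1 y2 x1' x2' y1' y2' :
  x1 = x1' -> x2 = x2' -> y1 = y1' -> y2 = y2' -> cv a b c x1 x2 y1 y2 = cv a b c x1' x2' y1' y2'.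
Proof. intros; subst; reflexivity. Qed.

Lemma lattice_cv a b c l : in_lattice a b c l <->
  exists n1 n2 m1 m2, l = cv a b c (IZR n1) (IZR n2) (IZR m1) (4 * IZR m2).
Proof.
  split; intros [n1 [n2 [m1 [m2 H]]]]; exists n1, n2, m1, m2; rewrite H;
    unfold cv, vadd, Zv; cbn [fst snd]; f_equal; rewrite ?RtoC_mult; ring.
Qed.

Lemma lattice_cv' a b c n1 n2 m1 m2 x1 x2 y1 y2 :
  x1 = IZR n1 -> x2 = IZR n2 -> y1 = IZR m1 -> y2 = 4 * IZR m2 -> in_lattice a b c (cv a b c x1 x2 y1 y2).
Proof. intros; subst. apply lattice_cv. eauto. Qed.

Lemma E_formula a b c x1 x2 y1 y2 x1' x2' y1' y2' : siegel2 a b c ->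
  E_L0 a b c (cv a b c x1 x2 y1 y2) (cv a b c x1' x2' y1' y2') = x1 * y1' + x2 * y2' - y1 * x1' - y2 * x2'.
Proof.
  intros [Hp Hd]. destruct a as [a1 a2], b as [b1 b2], c as [c1 c2]. simpl in Hp, Hd.
  unfold E_L0, cv, vadd, Zv, Cconj. simpl. field. lra.
Qed.

Lemma cv_inj a b c x1 x2 y1 y2 x1' x2' y1' y2' : siegel2 a b c ->
  cv a b c x1 x2 y1 y2 = cv a b c x1' x2' y1' y2' -> x1 = x1' /\ x2 = x2' /\ y1 = y1' /\ y2 = y2'.
Proof.
  intros [Hp Hd]. destruct a as [a1 a2], b as [b1 b2], c as [c1 c2]. simpl in Hp, Hd.
  unfold cv, vadd, Zv. simpl. intros H. injection H as H1 H2 H3 H4.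
  set (D := a2 * c2 - b2 * b2) in *.
  assert (G2 : a2 * (x1 - x1') + b2 * (x2 - x2') = 0) by lra.
  assert (G4 : b2 * (x1 - x1') + c2 * (x2 - x2') = 0) by lra.
  assert (E1 : D * (x1 - x1') = 0).
  { replace (D * (x1 - x1')) with (c2 * (a2 * (x1 - x1') + b2 * (x2 - x2')) - b2 * (b2 * (x1 - x1') + c2 * (x2 - x2'))) by (unfold D; ring).
    rewrite G2, G4; ring. }
  assert (E2 : D * (x2 - x2') = 0).
  { replace (D * (x2 - x2')) with (a2 * (b2 * (x1 - x1') + c2 * (x2 - x2')) - b2 * (a2 * (x1 - x1') + b2 * (x2 - x2'))) by (unfold D; ring).
    rewrite G2, G4; ring. }
  apply Rmult_integral in E1. apply Rmult_integral in E2.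
  assert (x1 = x1') by lra. assert (x2 = x2') by lra. subst. repeat split; lra.
Qed.

Definition fk (a b c : C) (e1 e2 : bool) : C * C :=
  cv a b c 0 (if e1 then /2 else 0) 0 (if e2 then 2 else 0).

Lemma half_not_int n : IZR n <> /2 /\ IZR n <> - /2.
Proof.
  split; intros H.
  - assert (IZR (2 * n) = IZR 1) by (rewrite mult_IZR; lra). apply eq_IZR in H0. lia.
  - assert (IZR (2 * n) = IZR (-1)) by (rewrite mult_IZR; simpl; lra). apply eq_IZR in H0. lia.
Qed.

Lemma decomp a b c v : siegel2 a b c -> in_K_cap_A2 a b c v ->
  exists n1 n2 m1 m2 e1 e2,
    v = vadd (cv a b c (IZR n1) (IZR n2) (IZR m1) (4 * IZR m2)) (fk a b c e1 e2).
Proof.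
  intros Hs [HK HA]. unfold in_A2 in HA. apply lattice_cv in HA.
  destruct HA as [N1 [N2 [M1 [M2 HA]]]].
  assert (Hv : v = cv a b c (IZR N1 / 2) (IZR N2 / 2) (IZR M1 / 2) (2 * IZR M2)).
  { replace v with (vscal (/2) (vscal 2 v)).
    - rewrite HA. unfold cv, vscal, vadd, Zv; cbn [fst snd]; f_equal; rewrite ?RtoC_mult; rewrite ?RtoC_div by lra;
      field; intros H; injection H; lra.
    - destruct v; unfold vscal; cbn [fst snd]; f_equal; field; intros H; injection H; lra. }
  destruct (HK (cv a b c 0 0 1 0)) as [k1 Hk1].
  { apply (lattice_cv' _ _ _ 0 0 1 0); simpl; lra. }
  destruct (HK (cv a b c 1 0 0 0)) as [k2 Hk2].
  { apply (lattice_cv' _ _ _ 1 0 0 0); simpl; lra. }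
  rewrite Hv, E_formula in Hk1, Hk2; auto.
  pose proof (Zdiv2_odd_eqn N2) as HN2. pose proof (Zdiv2_odd_eqn M2) as HM2.
  exists k1, (Z.div2 N2), (- k2)%Z, (Z.div2 M2), (Z.odd N2), (Z.odd M2).
  rewrite Hv. unfold fk. rewrite cv_add.
  apply cv_ext.
  - lra.
  - rewrite HN2 at 1. rewrite plus_IZR, mult_IZR. destruct (Z.odd N2); simpl; lra.
  - rewrite opp_IZR. lra.
  - rewrite HM2 at 1. rewrite plus_IZR, mult_IZR. destruct (Z.odd M2); simpl; lra.
Qed.

Lemma Inv_fk a b c e1 e2 : siegel2 a b c -> Inv a b c (fk a b c e1 e2).
Proof.
  intros Hs. unfold fk, cv. apply Inv_add.
  - destruct e1; [apply Inv_h; auto|]. apply (Inv_Zn a b c 0 0 Hs).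
  - destruct e2; [apply Inv_2; auto|apply Inv_0].
Qed.

Lemma bool_R (e : bool) (x : R) : (if e then x else 0) = 0 \/ (if e then x else 0) = x.
Proof. destruct e; auto. Qed.

Theorem corollary3p5 (a b c : C) (hZ : siegel2 a b c) :
  (forall v : C * C, in_K_cap_A2 a b c v ->
     forall w : C * C, C_A a b c (vadd w v) <-> C_A a b c w) /\
  (exists f : bool * bool -> C * C, klein_iso a b c f).
Proof.
  split.
  - intros v Hv w. destruct (decomp a b c v hZ Hv) as [n1 [n2 [m1 [m2 [e1 [e2 ->]]]]]].
    apply Inv_CA. apply Inv_add; [|apply Inv_fk; auto].
    unfold cv. apply Inv_add; [apply Inv_Zn; auto|apply Inv_M; auto].
  - exists (fun x => fk a b c (fst x) (snd x)). unfold klein_iso. split; [|split; [|split]].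
    + intros [e1 e2]. cbn [fst snd]. split.
      * intros l Hl. apply lattice_cv in Hl. destruct Hl as [n1 [n2 [m1 [m2 ->]]]].
        unfold fk. rewrite E_formula by auto.
        exists ((if e1 then 2 * m2 else 0) - (if e2 then 2 * n2 else 0))%Z.
        rewrite minus_IZR. destruct e1, e2; rewrite ?mult_IZR; simpl; lra.
      * unfold in_A2, fk. rewrite cv_scal.
        apply (lattice_cv' _ _ _ 0 (if e1 then 1 else 0) 0 (if e2 then 1 else 0));
          destruct e1, e2; simpl; lra.
    + intros [x1 x2] [y1 y2]. cbn [fst snd]. unfold fk. rewrite cv_add, cv_sub.
      apply (lattice_cv' _ _ _ 0 (if andb x1 y1 then -1 else 0) 0 (if andb x2 y2 then -1 else 0));
        destruct x1, x2, y1, y2; simpl; lra.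
    + intros [x1 x2] [y1 y2]. cbn [fst snd]. unfold fk. rewrite cv_sub. intros Hl.
      apply lattice_cv in Hl. destruct Hl as [n1 [n2 [m1 [m2 Hl]]]].
      apply cv_inj in Hl; auto. destruct Hl as [_ [H2 [_ H4]]].
      pose proof (half_not_int n2) as [N1 N2].
      pose proof (half_not_int m2) as [N3 N4].
      destruct x1, x2, y1, y2; simpl in H2, H4; auto; exfalso;
        first [apply N1; lra | apply N2; lra | apply N3; lra | apply N4; lra].
    + intros v Hv. destruct (decomp a b c v hZ Hv) as [n1 [n2 [m1 [m2 [e1 [e2 ->]]]]]].
      exists (e1, e2). cbn [fst snd]. apply lattice_cv. exists n1, n2, m1, m2.
      destruct (cv a b c (IZR n1) (IZR n2) (IZR m1) (4 * IZR m2)), (fk a b c e1 e2).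
      unfold vsub, vadd; cbn [fst snd]. f_equal; ring.
Qed.
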